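(* For every $0<r<1$, the set $\Sigma_r:=\{q\in B:\ d(q,\partial B)=1-r\}$ is a topological sphere.
   Context: The first Heisenberg group $\mathbb{H}^1$ is $\mathbb{R}^3$ with product $(x,y,t)\cdot(x',y',t')=(x+x',y+y',t+t'-2xy'+2yx')$, Korányi norm $\|(z,t)\|=(|z|^4+t^2)^{1/4}$ ($z=x+\mathrm{i}y$), distance $d(p,q)=\|q^{-1}\cdot p\|$, $d(q,A)=\inf_{a\in A}d(q,a)$, and $B=\{q:\|q\|<1\}$ is the Korányi unit ball. *)

(* Defs.v *)
(* R : realType, H^1 modelled as R * R * R = ((x,y),t). *)
From HB Require Import structures.
From mathcomp Require Import all_boot all_order all_algebra.
From mathcomp Require Import all_classical all_reals all_analysis.
Set Implicit Arguments. Unset Strict Implicit. Unset Printing Implicit Defensive.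
Import Order.TTheory GRing.Theory Num.Theory.
Import numFieldNormedType.Exports.
Local Open Scope classical_set_scope.
Local Open Scope ring_scope.

Notation hpt R := ((R : realType) * (R : realType) * (R : realType))%type.

Definition hmul (R : realType) (p q : hpt R) : hpt R :=
  (p.1.1 + q.1.1, p.1.2 + q.1.2, p.2 + q.2 - 2 * p.1.1 * q.1.2 + 2 * p.1.2 * q.1.1).

Definition hinv (R : realType) (p : hpt R) : hpt R := (- p.1.1, - p.1.2, - p.2).

Definition kor_norm (R : realType) (p : hpt R) : R :=
  Num.sqrt (Num.sqrt ((p.1.1 ^+ 2 + p.1.2 ^+ 2) ^+ 2 + p.2 ^+ 2)).

Definition kdist (R : realType) (p q : hpt R) : R := kor_norm (hmul (hinv q) p).

Definition kdist_set (R : realType) (q : hpt R) (A : set (hpt R)) : R :=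
  inf [set kdist q a | a in A].

Definition kball (R : realType) : set (hpt R) := [set q | kor_norm q < 1].

(* topological boundary (topology of R^3 = topology of the Koranyi metric) *)
Definition tboundary (R : realType) (A : set (hpt R)) : set (hpt R) :=
  closure A `\` interior A.

Definition Sigma (R : realType) (r : R) : set (hpt R) :=
  [set q | kball q /\ kdist_set q (tboundary (@kball R)) = 1 - r].

Definition sphere2 (R : realType) : set (hpt R) :=
  [set p | p.1.1 ^+ 2 + p.1.2 ^+ 2 + p.2 ^+ 2 = 1].

Definition homeomorphic (R : realType) (A B : set (hpt R)) : Prop :=
  exists (f g : hpt R -> hpt R),
    [/\ (forall a, A a -> B (f a)), (forall b, B b -> A (g b)),
        (forall a, A a -> g (f a) = a) & (forall b, B b -> f (g b) = b)]
    /\ {within A, continuous f} /\ {within B, continuous g}.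

(* Main.v *)
Require Import Defs.
From HB Require Import structures.
From mathcomp Require Import all_boot all_order all_algebra.
From mathcomp Require Import all_classical all_reals all_analysis.
From mathcomp Require Import ring lra.
Import Order.TTheory GRing.Theory Num.Theory.
Import numFieldNormedType.Exports.
Local Open Scope classical_set_scope.
Local Open Scope ring_scope.
Set Implicit Arguments. Unset Strict Implicit. Unset Printing Implicit Defensive.
Section Alg.
Variable R : realType.
Implicit Types p q w : hpt R.
Definition hA p : R := p.1.1 ^+ 2 + p.1.2 ^+ 2.
Definition nm (a b : R) : R := Num.sqrt (a ^+ 2 + b ^+ 2).
Definition n2 p : R := nm (hA p) p.2.
Definition dil (s : R) p : hpt R := (s * p.1.1, s * p.1.2, s ^+ 2 * p.2).

Lemma le_sq (u v : R) : 0 <= v -> u ^+ 2 <= v ^+ 2 -> u <= v.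
Proof. move=> v0 h; nra. Qed.

Lemma nm_ge0 a b : 0 <= nm a b. Proof. exact: sqrtr_ge0. Qed.
Lemma nm_sq a b : nm a b ^+ 2 = a ^+ 2 + b ^+ 2.
Proof. rewrite sqr_sqrtr //; nra. Qed.
Lemma nm_gel a b : a <= nm a b.
Proof. apply: le_sq; [exact: nm_ge0| rewrite nm_sq; nra]. Qed.
Lemma nm_ger a b : `|b| <= nm a b.
Proof. apply: le_sq; [exact: nm_ge0| rewrite nm_sq real_normK; [nra|exact: num_real]]. Qed.
Lemma nm_gel' a b : `|a| <= nm a b.
Proof. apply: le_sq; [exact: nm_ge0| rewrite nm_sq real_normK; [nra|exact: num_real]]. Qed.
Lemma nm_tri a b c d : nm (a + c) (b + d) <= nm a b + nm c d.
Proof.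
have h1 := nm_sq a b; have h2 := nm_sq c d; have g1 := nm_ge0 a b; have g2 := nm_ge0 c d.
have cs : a * c + b * d <= nm a b * nm c d.
  apply: le_sq; first exact: mulr_ge0.
  rewrite exprMn h1 h2; have := sqr_ge0 (a * d - b * c); nra.
apply: le_sq; first exact: addr_ge0.
rewrite nm_sq; nra.
Qed.
Lemma nm_scale k a b : nm (k * a) (k * b) = `|k| * nm a b.
Proof.
rewrite /nm -sqrtr_sqr -sqrtrM ?sqr_ge0 //; congr Num.sqrt; ring.
Qed.
Lemma nm0 : nm 0 0 = 0. Proof. by rewrite /nm expr0n /= addr0 sqrtr0. Qed.
Lemma nm_eq0 a b : nm a b = 0 -> a = 0 /\ b = 0.
Proof. move=> h; have := nm_sq a b; rewrite h expr0n /= => e; split; nra. Qed.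
Definition o : hpt R := (0, 0, 0).
Definition cr1 p q : R := p.1.1 * q.1.1 + p.1.2 * q.1.2.
Definition cr2 p q : R := p.1.2 * q.1.1 - p.1.1 * q.1.2.
Local Notation N := (@kor_norm R).

Lemma hmulA p q w : hmul (hmul p q) w = hmul p (hmul q w).
Proof. case: p => [[? ?] ?]; case: q => [[? ?] ?]; case: w => [[? ?] ?]. rewrite /hmul /=; f_equal; [f_equal|]; ring. Qed.
Lemma hinv_mul p q : hinv (hmul p q) = hmul (hinv q) (hinv p).
Proof. case: p => [[? ?] ?]; case: q => [[? ?] ?]. rewrite /hmul /hinv /=; f_equal; [f_equal|]; ring. Qed.
Lemma hmulVp p q : hmul (hinv p) (hmul p q) = q.
Proof. case: p => [[? ?] ?]; case: q => [[? ?] ?]. rewrite /hmul /hinv /=; f_equal; [f_equal|]; ring. Qed.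
Lemma hmulpV p q : hmul p (hmul (hinv p) q) = q.
Proof. case: p => [[? ?] ?]; case: q => [[? ?] ?]. rewrite /hmul /hinv /=; f_equal; [f_equal|]; ring. Qed.
Lemma hmulV p : hmul (hinv p) p = o.
Proof. case: p => [[? ?] ?]. rewrite /hmul /hinv /o /=; f_equal; [f_equal|]; ring. Qed.
Lemma hmulp0 p : hmul p o = p.
Proof. case: p => [[? ?] ?]. rewrite /hmul /o /=; f_equal; [f_equal|]; ring. Qed.
Lemma hmul0p p : hmul o p = p.
Proof. case: p => [[? ?] ?]. rewrite /hmul /o /=; f_equal; [f_equal|]; ring. Qed.
Lemma hinvK p : hinv (hinv p) = p.
Proof. case: p => [[? ?] ?]. rewrite /hinv /=; f_equal; [f_equal|]; ring. Qed.

Lemma hA_ge0 p : 0 <= hA p. Proof. rewrite /hA; nra. Qed.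
Lemma hA_mul p q : hA (hmul p q) = hA p + hA q + 2 * cr1 p q.
Proof. rewrite /hA /cr1 /hmul /=; ring. Qed.
Lemma t_mul p q : (hmul p q).2 = p.2 + q.2 + 2 * cr2 p q.
Proof. rewrite /cr2 /hmul /=; ring. Qed.
Lemma cr_sq p q : cr1 p q ^+ 2 + cr2 p q ^+ 2 = hA p * hA q.
Proof. rewrite /cr1 /cr2 /hA; ring. Qed.
Lemma nm_cr p q : nm (cr1 p q) (cr2 p q) = Num.sqrt (hA p) * Num.sqrt (hA q).
Proof. by rewrite /nm cr_sq sqrtrM // hA_ge0. Qed.
Lemma n2_ge0 p : 0 <= n2 p. Proof. exact: nm_ge0. Qed.
Lemma hA_le_n2 p : hA p <= n2 p. Proof. exact: nm_gel. Qed.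
Lemma t_le_n2 p : `|p.2| <= n2 p. Proof. exact: nm_ger. Qed.
Lemma N_ge0 p : 0 <= N p. Proof. exact: sqrtr_ge0. Qed.
Lemma N_sq p : N p ^+ 2 = n2 p. Proof. by rewrite /kor_norm sqr_sqrtr // n2_ge0. Qed.
Lemma sqrt_hA_le p : Num.sqrt (hA p) <= N p.
Proof. by rewrite /kor_norm ler_sqrt ?n2_ge0 // hA_le_n2. Qed.

Lemma n2_mul_le p q : n2 (hmul p q) <= n2 p + n2 q + 2 * (Num.sqrt (hA p) * Num.sqrt (hA q)).
Proof.
rewrite /n2 hA_mul t_mul -nm_cr.
apply: le_trans (nm_tri _ _ _ _) _.
rewrite nm_scale ger0_norm //. apply: lerD => //. exact: nm_tri.
Qed.

Lemma N_tri p q : N (hmul p q) <= N p + N q.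
Proof.
apply: le_sq; first by apply: addr_ge0; apply: N_ge0.
rewrite N_sq; apply: le_trans (n2_mul_le p q) _.
have h1 := sqrt_hA_le p; have h2 := sqrt_hA_le q.
have g1 := sqrtr_ge0 (hA p); have g2 := sqrtr_ge0 (hA q).
rewrite -!N_sq. have := N_ge0 p; have := N_ge0 q. nra.
Qed.

Lemma N_inv p : N (hinv p) = N p.
Proof. by rewrite /kor_norm /n2 /nm /hA /hinv /= !sqrrN. Qed.

Lemma hA_dil s p : hA (dil s p) = s ^+ 2 * hA p. Proof. rewrite /hA /dil /=; ring. Qed.
Lemma n2_dil s p : n2 (dil s p) = s ^+ 2 * n2 p.
Proof. by rewrite /n2 hA_dil nm_scale ger0_norm ?sqr_ge0. Qed.
Lemma N_dil s p : 0 <= s -> N (dil s p) = s * N p.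
Proof. move=> s0; change (Num.sqrt (n2 (dil s p)) = s * Num.sqrt (n2 p)); rewrite n2_dil sqrtrM ?sqr_ge0 // sqrtr_sqr ger0_norm //. Qed.
Lemma dil_mul s p q : hmul (dil s p) (dil s q) = dil s (hmul p q).
Proof. rewrite /hmul /dil /=; f_equal; [f_equal|]; ring. Qed.
Lemma dil_dil a b p : dil a (dil b p) = dil (a * b) p.
Proof. rewrite /dil /=; f_equal; [f_equal|]; ring. Qed.
Lemma dil_inv s p : hinv (dil s p) = dil s (hinv p).
Proof. rewrite /hinv /dil /=; f_equal; [f_equal|]; ring. Qed.
Lemma dil1 p : dil 1 p = p.
Proof. case: p => [[? ?] ?]; rewrite /dil /=; f_equal; [f_equal|]; ring. Qed.
Lemma dil0 p : dil 0 p = o.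
Proof. rewrite /dil /o /=; f_equal; [f_equal|]; ring. Qed.
Lemma N0 : N o = 0.
Proof. change (Num.sqrt (nm (hA o) 0) = 0); rewrite /hA /o /= expr0n /= addr0 nm0 sqrtr0 //. Qed.
Lemma N_eq0 p : N p = 0 -> p = o.
Proof.
move=> h; have := N_sq p; rewrite h expr0n /= => /esym /nm_eq0 []; clear h.
case: p => [[x y] t] /=; rewrite /hA /= => hx ->; rewrite /o; f_equal; f_equal; nra.
Qed.
Definition unitv (P Q : R) : R * R :=
  if nm P Q == 0 then (1, 0) else (P / nm P Q, Q / nm P Q).
Definition rot q w : hpt R :=
  if hA q == 0 then w else
  let e := unitv (hA q + hA w) (q.2 + w.2) in
  let k := Num.sqrt (hA w) / Num.sqrt (hA q) in
  (k * (e.1 * q.1.1 + e.2 * q.1.2), k * (e.1 * q.1.2 - e.2 * q.1.1), w.2).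

Lemma unitv_sq P Q : (unitv P Q).1 ^+ 2 + (unitv P Q).2 ^+ 2 = 1.
Proof.
rewrite /unitv; case: eqP => [_|h] /=; first by rewrite expr1n expr0n /= addr0.
rewrite !expr_div_n -mulrDl -nm_sq divff // expf_neq0 //; exact/eqP.
Qed.

Lemma rot_hA q w : hA (rot q w) = hA w.
Proof.
rewrite /rot; case: eqP => // /eqP hq /=.
have e := unitv_sq (hA q + hA w) (q.2 + w.2).
set e1 := (unitv _ _).1 in e *; set e2 := (unitv _ _).2 in e *.
have -> : hA (Num.sqrt (hA w) / Num.sqrt (hA q) * (e1 * q.1.1 + e2 * q.1.2),
   Num.sqrt (hA w) / Num.sqrt (hA q) * (e1 * q.1.2 - e2 * q.1.1), w.2)
  = (Num.sqrt (hA w) / Num.sqrt (hA q)) ^+ 2 * ((e1 ^+ 2 + e2 ^+ 2) * hA q).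
  rewrite /hA /=; ring.
rewrite e mul1r expr_div_n !sqr_sqrtr ?hA_ge0 // mulfVK //.
Qed.
Lemma rot_t q w : (rot q w).2 = w.2.
Proof. by rewrite /rot; case: eqP. Qed.
Lemma N_rot q w : N (rot q w) = N w.
Proof. by change (Num.sqrt (nm (hA (rot q w)) (rot q w).2) = Num.sqrt (nm (hA w) w.2)); rewrite rot_hA rot_t. Qed.

Lemma hA0 p : hA p = 0 -> p.1.1 = 0 /\ p.1.2 = 0.
Proof. rewrite /hA => h; split; nra. Qed.

Lemma rot_n2 q w : n2 (hmul q (rot q w)) =
  nm (hA q + hA w) (q.2 + w.2) + 2 * (Num.sqrt (hA q) * Num.sqrt (hA w)).
Proof.
rewrite /n2 hA_mul t_mul rot_hA rot_t.
case: (eqVneq (hA q) 0) => hq.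
  have [hx hy] := hA0 hq.
  rewrite /rot hq eqxx /cr1 /cr2 hx hy sqrtr0 !mul0r !mulr0 !subr0 !addr0.
  by rewrite !mulr0 !addr0.
set S := Num.sqrt (hA q) * Num.sqrt (hA w).
have sq : Num.sqrt (hA q) ^+ 2 = hA q by rewrite sqr_sqrtr // (hA_ge0 q).
have sq0 : Num.sqrt (hA q) != 0 by rewrite sqrtr_eq0 -ltNge lt_def hq hA_ge0.
have [c1 c2] : cr1 q (rot q w) = S * (unitv (hA q + hA w) (q.2 + w.2)).1 /\
               cr2 q (rot q w) = S * (unitv (hA q + hA w) (q.2 + w.2)).2.
  rewrite /rot (negPf hq) /cr1 /cr2 /=.
  set e1 := (unitv _ _).1; set e2 := (unitv _ _).2.
  set k := Num.sqrt (hA w) / Num.sqrt (hA q).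
  have kA : k * hA q = S.
    rewrite /k /S; move: sq sq0; set a := Num.sqrt (hA q); set b := Num.sqrt (hA w).
    by move=> sq sq0; rewrite -sq; field.
  rewrite -kA /hA; split; ring.
rewrite c1 c2 /unitv.
have S0 : 0 <= S by apply: mulr_ge0; apply: sqrtr_ge0.
case: eqP => [/[dup] h /nm_eq0 [-> ->]|/eqP h] /=.
  by rewrite nm0 !add0r mulr1 !mulr0 /nm expr0n /= addr0 sqrtr_sqr ger0_norm // mulr_ge0.
set n := nm _ _ in h *.
have n0 : 0 < n by rewrite lt_def h /=; exact: nm_ge0.
have -> : hA q + hA w + 2 * (S * ((hA q + hA w) / n)) = (1 + 2 * S / n) * (hA q + hA w).
  by field.
have -> : q.2 + w.2 + 2 * (S * ((q.2 + w.2) / n)) = (1 + 2 * S / n) * (q.2 + w.2).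
  by field.
rewrite nm_scale ger0_norm; last by apply: addr_ge0 => //; apply: divr_ge0 => //; [apply: mulr_ge0 | apply: ltW].
rewrite -/n; field; exact: h.
Qed.
End Alg.
Section T.
Variable R : realType.
Local Notation N := (@kor_norm R).
Local Notation o := (@o R).
Lemma c11 : continuous (fun p : hpt R => p.1.1).
Proof. move=> p; apply: cvg_comp; exact: cvg_fst. Qed.
Lemma c12 : continuous (fun p : hpt R => p.1.2).
Proof. move=> p; apply: cvg_comp; [exact: cvg_fst| exact: cvg_snd]. Qed.
Lemma c2 : continuous (fun p : hpt R => p.2).
Proof. move=> p; exact: cvg_snd. Qed.
Lemma csq {T : Type} (F : set_system T) {FF : Filter F} (f : T -> R) (a : R) :
  f @ F --> a -> (fun x => f x ^+ 2) @ F --> a ^+ 2.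
Proof. move=> h; rewrite expr2; under eq_fun do rewrite expr2. exact: cvgM. Qed.
Lemma csqrt {T : Type} (F : set_system T) {FF : Filter F} (f : T -> R) (a : R) :
  f @ F --> a -> (fun x => Num.sqrt (f x)) @ F --> Num.sqrt a.
Proof. move=> h; apply: continuous_cvg => //; exact: sqrt_continuous. Qed.
Lemma cont_hA : continuous (@hA R).
Proof. move=> p; apply: cvgD; apply: csq; [exact: c11|exact: c12]. Qed.
Lemma cont_nm {T : Type} (F : set_system T) {FF : Filter F} (f g : T -> R) (a b : R) :
  f @ F --> a -> g @ F --> b -> (fun x => nm (f x) (g x)) @ F --> nm a b.
Proof. move=> ha hb; apply: csqrt; apply: cvgD; exact: csq. Qed.
Lemma cont_n2 : continuous (@n2 R).
Proof. move=> p; apply: cont_nm; [exact: cont_hA| exact: c2]. Qed.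
Lemma cont_N : continuous N.
Proof. move=> p; apply: csqrt; exact: cont_n2. Qed.
Lemma cont_dil {T : Type} (F : set_system T) {FF : Filter F} (g : T -> R) (h : T -> hpt R) s p :
  g @ F --> s -> h @ F --> p -> (fun x => dil (g x) (h x)) @ F --> dil s p.
Proof.
move=> hg hh; rewrite /dil.
have h11 : (fun x => (h x).1.1) @ F --> p.1.1 := cvg_comp _ _ hh (@c11 p).
have h12 : (fun x => (h x).1.2) @ F --> p.1.2 := cvg_comp _ _ hh (@c12 p).
have h2 : (fun x => (h x).2) @ F --> p.2 := cvg_comp _ _ hh (@c2 p).
apply: (@cvg_pair _ _ _ _ (nbhs (s * p.1.1, s * p.1.2)) (nbhs (s ^+ 2 * p.2))).
  apply: (@cvg_pair _ _ _ _ (nbhs (s * p.1.1)) (nbhs (s * p.1.2))); apply: cvgM => //.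
apply: cvgM => //; exact: csq.
Qed.

Lemma cont_hmul {T : Type} (F : set_system T) {FF : Filter F} (g h : T -> hpt R) p q :
  g @ F --> p -> h @ F --> q -> (fun x => hmul (g x) (h x)) @ F --> hmul p q.
Proof.
move=> hg hh; rewrite /hmul.
have g11 : (fun x => (g x).1.1) @ F --> p.1.1 := cvg_comp _ _ hg (@c11 p).
have g12 : (fun x => (g x).1.2) @ F --> p.1.2 := cvg_comp _ _ hg (@c12 p).
have g2 : (fun x => (g x).2) @ F --> p.2 := cvg_comp _ _ hg (@c2 p).
have h11 : (fun x => (h x).1.1) @ F --> q.1.1 := cvg_comp _ _ hh (@c11 q).
have h12 : (fun x => (h x).1.2) @ F --> q.1.2 := cvg_comp _ _ hh (@c12 q).
have h2 : (fun x => (h x).2) @ F --> q.2 := cvg_comp _ _ hh (@c2 q).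
apply: (@cvg_pair _ _ _ _ (nbhs (p.1.1 + q.1.1, p.1.2 + q.1.2)) (nbhs (p.2 + q.2 - 2 * p.1.1 * q.1.2 + 2 * p.1.2 * q.1.1))).
  apply: (@cvg_pair _ _ _ _ (nbhs (p.1.1 + q.1.1)) (nbhs (p.1.2 + q.1.2))); exact: cvgD.
apply: cvgD; [apply: cvgB; [exact: cvgD|]|]; (apply: cvgM; [apply: cvgM => //; exact: cvg_cst|done]).
Qed.

Lemma kball_open : open (@kball R).
Proof.
rewrite /kball; have -> : [set q | N q < 1] = N @^-1` [set x | x < 1] by [].
apply: open_comp; last exact: open_lt.
move=> x _; exact: cont_N.
Qed.

Lemma bdry : tboundary (@kball R) = [set q | N q = 1].
Proof.
rewrite /tboundary (proj1 (interior_id _) kball_open).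
have cl : closed [set q : hpt R | N q <= 1].
  have -> : [set q | N q <= 1] = N @^-1` [set x | x <= 1] by [].
  apply: preimage_closed; last exact: closed_le.
  move=> x _; exact: cont_N.
apply/seteqP; split => q /=.
  move=> [qc qn]; rewrite /kball /= in qn.
  have : [set q : hpt R | N q <= 1] q.
    move: cl => /closure_id ->; apply: closureS qc => x /=; exact: ltW.
  by rewrite /= le_eqVlt; case/orP => [/eqP//|/qn].
move=> Nq; split; last by rewrite /kball /= Nq ltxx.
move=> U hU.
have hg : (fun s : R => dil s q) @ (1 : R) --> q.
  rewrite -[X in _ --> X]dil1; exact: (@cont_dil _ (nbhs (1:R)) _ id (fun _ => q) 1 q cvg_id (cvg_cst q)).
have := hg U hU; move=> /nbhs_ballP [e e0 he].
set s := 1 - Num.min e 1 / 2.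
have m0 : 0 < Num.min e 1 by rewrite lt_min e0 ltr01.
have m1 : Num.min e 1 <= 1 by rewrite ge_min lexx orbT.
have me : Num.min e 1 <= e by rewrite ge_min lexx.
exists (dil s q); split.
  rewrite /kball /= N_dil ?Nq ?mulr1 /s; lra.
apply: he; rewrite -ball_normE /ball_ /= /s.
rewrite opprB addrC subrK ger0_norm; lra.
Qed.
Definition fd (q : hpt R) : R := kdist_set q (tboundary (@kball R)).
Definition e1 : hpt R := (1, 0, 0).
Lemma N_e1 : N e1 = 1.
Proof.
change (Num.sqrt (nm (hA e1) 0) = 1).
rewrite /nm /hA /e1 /=.
rewrite [X in Num.sqrt (Num.sqrt X)](_ : _ = 1); [by rewrite !sqrtr1 | ring]. Qed.

Lemma fdE q : fd q = inf [set N (hmul (hinv a) q) | a in [set a | N a = 1]].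
Proof. by rewrite /fd /kdist_set bdry. Qed.
Lemma fd_has_lb q : has_lbound [set N (hmul (hinv a) q) | a in [set a | N a = 1]].
Proof. by exists 0 => _ [a _ <-]; exact: N_ge0. Qed.
Lemma fd_ne q : [set N (hmul (hinv a) q) | a in [set a | N a = 1]] !=set0.
Proof. by exists (N (hmul (hinv e1) q)); exists e1 => //; exact: N_e1. Qed.
Lemma fd_le q a : N a = 1 -> fd q <= N (hmul (hinv a) q).
Proof. move=> Na; rewrite fdE; apply: ge_inf; first exact: fd_has_lb. by exists a. Qed.
Lemma fd_lb q m : (forall a, N a = 1 -> m <= N (hmul (hinv a) q)) -> m <= fd q.
Proof. move=> h; rewrite fdE; apply: lb_le_inf; first exact: fd_ne. by move=> _ [a Na <-]; apply: h. Qed.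
Lemma fd_ge0 q : 0 <= fd q.
Proof. apply: fd_lb => a _; exact: N_ge0. Qed.
Lemma fd_lip q q' : fd q <= fd q' + N (hmul (hinv q') q).
Proof.
rewrite -lerBlDr; apply: fd_lb => a Na; rewrite lerBlDr.
apply: le_trans (fd_le q Na) _.
rewrite -{1}(hmulpV q' q) -hmulA.
exact: N_tri.
Qed.
Lemma cvg_fd {T : Type} (F : set_system T) {FF : Filter F} (h : T -> hpt R) q :
  h @ F --> q -> (fun x => fd (h x)) @ F --> fd q.
Proof.
move=> hh.
have hg : (fun x => N (hmul (hinv q) (h x))) @ F --> 0.
  rewrite -N0 -(hmulV q).
  exact: (cvg_comp _ _ (cont_hmul (cvg_cst (hinv q)) hh) (@cont_N (hmul (hinv q) q))).
apply: (@squeeze_cvgr _ _ _ _ (fun x => fd q - N (hmul (hinv q) (h x))) (fun x => fd q + N (hmul (hinv q) (h x)))).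
- near=> x; apply/andP; split.
    rewrite lerBlDr; have := fd_lip q (h x).
    by rewrite -N_inv hinv_mul hinvK.
  exact: fd_lip.
- rewrite -[X in _ --> X]subr0; apply: cvgB => //; exact: cvg_cst.
- rewrite -[X in _ --> X]addr0; apply: cvgD => //; exact: cvg_cst.
Unshelve. all: by end_near.
Qed.
Lemma fd_o : fd o = 1.
Proof.
apply/eqP; rewrite eq_le; apply/andP; split.
  by apply: le_trans (fd_le o N_e1) _; rewrite hmulp0 N_inv N_e1.
by apply: fd_lb => a Na; rewrite hmulp0 N_inv Na.
Qed.
Lemma fd_bd u : N u = 1 -> fd u = 0.
Proof.
move=> Nu; apply/eqP; rewrite eq_le fd_ge0 andbT.
by apply: le_trans (fd_le u Nu) _; rewrite hmulV N0.
Qed.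

Lemma cont_path q v : continuous (fun l : R => N (hmul q (dil l v))).
Proof.
move=> l.
have h1 : (fun l : R => dil l v) @ l --> dil l v.
  exact: (@cont_dil _ (nbhs l) _ id (fun _ => v) l v cvg_id (cvg_cst v)).
exact: (cvg_comp _ _ (cont_hmul (cvg_cst q) h1) (@cont_N _)).
Qed.

Lemma P1 q v : N q < 1 -> N v <= fd q -> N (hmul q v) <= 1.
Proof.
move=> Nq Nv; rewrite leNgt; apply/negP => H.
set phi := fun l : R => N (hmul q (dil l v)).
have p0 : phi 0 = N q by rewrite /phi dil0 hmulp0.
have p1 : phi 1 = N (hmul q v) by rewrite /phi dil1.
have [l l01 pl] : exists2 l, l \in `[0, 1] & phi l = 1.
  apply: IVT; first exact: ler01.
    apply: continuous_subspaceT; exact: cont_path.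
  rewrite p0 p1; apply/andP; split.
    by rewrite ge_min (ltW Nq).
  by rewrite le_max (ltW H) orbT.
move: l01; rewrite in_itv /= => /andP [l0 l1].
have lt1 : l < 1.
  rewrite lt_def l1 andbT; apply/eqP => e; move: pl; rewrite -e p1 => e'.
  by move: H; rewrite e' ltxx.
have := fd_le q pl.
rewrite hinv_mul hmulA hmulV hmulp0 N_inv N_dil // => h.
have Nv0 : N v = 0.
  have := N_ge0 v; nra.
move: H; apply/negP; rewrite -leNgt.
apply: le_trans (N_tri _ _) _; rewrite Nv0 addr0; exact: ltW.
Qed.
End T.
Section K.
Variable R : realFieldType.
Definition Phi (s sA rho m : R) := m ^+ 2 + 2 * s * sA * m + s ^+ 2 * (1 - rho ^+ 2 - 2 * sA * rho).
Lemma Phi_lt1 (s sA rho : R) : 0 <= s -> s < 1 -> 0 <= sA -> 0 <= rho -> rho < 1 -> sA + rho <= 1 ->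
  Phi s sA rho rho < 1.
Proof.
move=> s0 s1 a0 r0 r1 ar; rewrite /Phi.
have h1 : 0 < (1 - s) * (1 - rho) by apply: mulr_gt0; lra.
have h2 : sA * rho <= (1 - rho) * rho by apply: ler_wpM2r => //; lra.
have h3 : s * (1 - s) * (sA * rho) <= s * (1 - s) * ((1 - rho) * rho).
  by apply: ler_wpM2l => //; apply: mulr_ge0; lra.
have h4 : 0 <= (1 - s) * (1 - rho) * (s + rho * (1 - s)).
  apply: mulr_ge0; [apply: mulr_ge0; lra| apply: addr_ge0 => //; apply: mulr_ge0; lra].
nra.
Qed.
Lemma step1 (s sA sc m Y l : R) : 0 <= s -> s <= 1 -> 0 <= sA -> 0 <= sc -> sc <= m -> 0 <= l -> l <= 1 ->
  1 <= s ^+ 2 * Y + (1 - s ^+ 2 * l ^+ 2) * m ^+ 2 + 2 * s * sA * sc ->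
  Y + 2 * l * sA * sc <= 1 ->
  1 <= s ^+ 2 + (1 - s ^+ 2 * l ^+ 2) * m ^+ 2 + 2 * sA * m * (s - s ^+ 2 * l).
Proof.
move=> s0 s1 a0 c0 cm l0 l1 H1 H2.
have e1 : s ^+ 2 * Y <= s ^+ 2 * (1 - 2 * l * sA * sc).
  apply: ler_wpM2l; [exact: sqr_ge0| lra].
have e2 : 0 <= s - s ^+ 2 * l.
  have : s * l <= 1 by apply: mulr_ile1.
  nra.
have e3 : 2 * sA * sc * (s - s ^+ 2 * l) <= 2 * sA * m * (s - s ^+ 2 * l).
  apply: ler_wpM2r => //; apply: ler_wpM2l => //; lra.
nra.
Qed.
Lemma final (s sA m rho : R) : 0 <= s -> s < 1 -> 0 <= sA -> 0 <= rho -> rho < 1 -> sA + rho <= 1 ->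
  0 <= m ->
  (forall l, 0 <= l -> l <= 1 -> (l = 1 /\ m <= rho \/ l * m = rho) ->
     1 <= s ^+ 2 + (1 - s ^+ 2 * l ^+ 2) * m ^+ 2 + 2 * sA * m * (s - s ^+ 2 * l)) ->
  rho + (1 - Phi s sA rho rho) / 5 <= m.
Proof.
move=> s0 s1 a0 r0 r1 ar m0 H.
have P1 := Phi_lt1 s0 s1 a0 r0 r1 ar.
rewrite leNgt; apply/negP => hm.
have Pge0 : 0 <= Phi s sA rho rho.
  have s2 : s ^+ 2 <= s by rewrite expr2; apply: ler_piMr => //; exact: ltW.
  have : 0 <= (1 - s ^+ 2) * rho ^+ 2 by apply: mulr_ge0; [nra| exact: sqr_ge0].
  have : 0 <= sA * rho * (s - s ^+ 2) by apply: mulr_ge0; [exact: mulr_ge0| lra].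
  rewrite /Phi; nra.
case: (lerP m rho) => mr.
  have := H 1 ler01 (lexx _) (or_introl (conj erefl mr)).
  rewrite expr1n !mulr1.
  have s2 : s ^+ 2 <= s by rewrite expr2; apply: ler_piMr => //; exact: ltW.
  have e1 : (1 - s ^+ 2) * m ^+ 2 <= (1 - s ^+ 2) * rho ^+ 2.
    apply: ler_wpM2l; first by nra.
    by rewrite ler_sqr ?nnegrE.
  have e2 : sA * m * (s - s ^+ 2) <= sA * rho * (s - s ^+ 2).
    by apply: ler_wpM2r; [lra| apply: ler_wpM2l].
  move: P1; rewrite /Phi; nra.
have m0' : m != 0 by rewrite gt_eqF // (le_lt_trans r0 mr).
set l := rho / m.
have lm : l * m = rho by rewrite /l mulfVK.
have l0 : 0 <= l by apply: divr_ge0.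
have l1 : l <= 1 by rewrite /l ler_pdivrMr ?mul1r ?(ltW mr) // (le_lt_trans r0 mr).
have := H l l0 l1 (or_intror lm).
have -> : s ^+ 2 + (1 - s ^+ 2 * l ^+ 2) * m ^+ 2 + 2 * sA * m * (s - s ^+ 2 * l)
   = s ^+ 2 + m ^+ 2 - s ^+ 2 * (l * m) ^+ 2 + 2 * sA * (s * m - s ^+ 2 * (l * m)) by ring.
rewrite lm => h.
have hs : s * sA <= 1 by nra.
have : Phi s sA rho m - Phi s sA rho rho = (m - rho) * (m + rho + 2 * s * sA) by rewrite /Phi; ring.
have : (m - rho) * (m + rho + 2 * s * sA) < (1 - Phi s sA rho rho) / 5 * 5.
  have hb : m + rho + 2 * s * sA <= 5 by nra.
  have hpos : 0 < m - rho by lra.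
  apply: (@le_lt_trans _ _ ((m - rho) * 5)); first by apply: ler_wpM2l => //; exact: ltW.
  by rewrite ltr_pM2r //; lra.
move: h; rewrite /Phi; nra.
Qed.
End K.
Section Key.
Variable R : realType.
Local Notation N := (@kor_norm R).
Local Notation o := (@o R).

Lemma n2_mul_le2 (p q : hpt R) : n2 (hmul p q) <= nm (hA p + hA q) (p.2 + q.2) + 2 * (Num.sqrt (hA p) * Num.sqrt (hA q)).
Proof.
rewrite /n2 hA_mul t_mul -nm_cr.
apply: le_trans (nm_tri _ _ _ _) _.
by rewrite nm_scale ger0_norm.
Qed.
Lemma n2_le1 (p : hpt R) : N p <= 1 -> n2 p <= 1.
Proof. move=> h; rewrite -N_sq; have := N_ge0 p; nra. Qed.
Lemma n2_eq1 (p : hpt R) : N p = 1 -> n2 p = 1.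
Proof. by move=> h; rewrite -N_sq h expr1n. Qed.
Lemma sqrt_kx (k x : R) : 0 <= k -> Num.sqrt (k ^+ 2 * x) = k * Num.sqrt x.
Proof. by move=> k0; rewrite sqrtrM ?sqr_ge0 // sqrtr_sqr ger0_norm. Qed.
Lemma hA_e1 : hA (e1 R) = 1. Proof. by rewrite /hA /e1 /= expr1n expr0n /= addr0. Qed.

Lemma key (q : hpt R) s : N q < 1 -> q != o -> 0 <= s -> s < 1 -> fd q < fd (dil s q).
Proof.
move=> Nq qo s0 s1.
have r0 : 0 <= fd q := fd_ge0 q.
set rho := fd q in r0 *.
have a0 : 0 <= Num.sqrt (hA q) := sqrtr_ge0 _.
have A0 : 0 <= hA q := hA_ge0 q.
have sAq : Num.sqrt (hA q) ^+ 2 = hA q by rewrite sqr_sqrtr.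
set sA := Num.sqrt (hA q) in a0 sAq *.
have st1 : sA + rho <= 1.
  have hN : N (rot q (dil rho (e1 R))) <= fd q by rewrite N_rot N_dil // N_e1 mulr1.
  have := n2_le1 (P1 Nq hN); rewrite rot_n2 hA_dil hA_e1 mulr1 sqrtr_sqr (ger0_norm r0) -/sA.
  move=> h; apply: le_sq => //; rewrite expr1n.
  have := nm_gel (hA q + rho ^+ 2) (q.2 + (dil rho (e1 R)).2). nra.
have st2 : `|q.2| + rho ^+ 2 <= 1.
  set e3 : hpt R := (0, 0, if 0 <= q.2 then 1 else -1).
  have hA3 : hA e3 = 0 by rewrite /hA /e3 /= expr0n /= addr0.
  have N3 : N e3 = 1.
    change (Num.sqrt (nm (hA e3) e3.2) = 1); rewrite hA3 /nm /e3 /=.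
    by case: ifP => _; rewrite ?sqrrN expr1n expr0n /= add0r !sqrtr1.
  have hN : N (rot q (dil rho e3)) <= fd q by rewrite N_rot N_dil // N3 mulr1.
  have := n2_le1 (P1 Nq hN); rewrite rot_n2 hA_dil hA3 mulr0 sqrtr0 !mulr0 addr0 addr0.
  have := nm_ger (hA q) (q.2 + (dil rho e3).2).
  rewrite /dil /e3 /=; case: ifP => h0.
    by rewrite mulr1 ger0_norm ?ger0_norm //; [lra| apply: addr_ge0 => //; exact: sqr_ge0].
  move/negbT: h0; rewrite -ltNge => h0.
  have hr : q.2 - rho ^+ 2 <= 0 by have := sqr_ge0 rho; lra.
  by rewrite mulrN1 (ler0_norm hr) (ltr0_norm h0); lra.
have r1 : rho < 1.
  rewrite lt_neqAle; apply/andP; split; last by lra.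
  apply/eqP => e; move: qo => /eqP; apply.
  have As : sA = 0 by lra.
  have A00 : hA q = 0 by rewrite -sAq As expr0n.
  have T0 : q.2 = 0 by move: st2; rewrite e expr1n; have := normr_ge0 q.2; move=> ? ?; apply/normr0_eq0; lra.
  have [x0 y0] := hA0 A00.
  by case: q x0 y0 T0 {Nq r0 rho e a0 A0 sAq sA st1 st2 As A00} => [[x y] t] /= -> -> ->.
have Pl1 := Phi_lt1 s0 s1 a0 r0 r1 st1.
suff h : rho + (1 - Phi s sA rho rho) / 5 <= fd (dil s q) by lra.
apply: fd_lb => a Na.
set w := hmul (hinv (dil s q)) a.
have aw : a = hmul (dil s q) w by rewrite /w hmulpV.
have -> : N (hmul (hinv a) (dil s q)) = N w by rewrite /w -N_inv hinv_mul hinvK.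
have m0 : 0 <= N w := N_ge0 w.
have c0 : 0 <= Num.sqrt (hA w) := sqrtr_ge0 _.
have cm : Num.sqrt (hA w) <= N w := sqrt_hA_le w.
have nw : nm (hA w) w.2 = N w ^+ 2 by rewrite N_sq.
set m := N w in m0 cm nw *.
set sc := Num.sqrt (hA w) in c0 cm *.
apply: final => //.
move=> l l0 l1 hl.
have sl : s * l <= 1 by apply: mulr_ile1 => //; exact: ltW.
set Y := nm (hA q + l ^+ 2 * hA w) (q.2 + l ^+ 2 * w.2).
have H1 : 1 <= s ^+ 2 * Y + (1 - s ^+ 2 * l ^+ 2) * m ^+ 2 + 2 * s * sA * sc.
  have := n2_eq1 Na; rewrite aw => e; rewrite -[X in X <= _]e.
  apply: le_trans (n2_mul_le2 _ _) _.
  rewrite hA_dil sqrt_kx // -/sA -/sc.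
  have -> : s ^+ 2 * hA q + hA w = s ^+ 2 * (hA q + l ^+ 2 * hA w) + (1 - s ^+ 2 * l ^+ 2) * hA w by ring.
  have -> : (dil s q).2 + w.2 = s ^+ 2 * (q.2 + l ^+ 2 * w.2) + (1 - s ^+ 2 * l ^+ 2) * w.2 by rewrite /dil /=; ring.
  have e2 : 2 * (s * sA * sc) = 2 * s * sA * sc by ring.
  rewrite e2 lerD2r; apply: le_trans (nm_tri _ _ _ _) _.
  have hk : 0 <= 1 - s ^+ 2 * l ^+ 2.
    by rewrite subr_ge0 -exprMn expr_le1 // mulr_ge0.
  by rewrite !nm_scale nw (ger0_norm hk) ger0_norm ?sqr_ge0.
have H2 : Y + 2 * l * sA * sc <= 1.
  have hN : N (rot q (dil l w)) <= fd q.
    rewrite N_rot N_dil // -/m -/rho.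
    by case: hl => [[-> mr]|<-]; rewrite ?mul1r.
  have := n2_le1 (P1 Nq hN); rewrite rot_n2 hA_dil sqrt_kx // -/sA -/sc.
  by rewrite -/Y /dil /=; have -> : 2 * (sA * (l * sc)) = 2 * l * sA * sc by ring.
exact: step1 (ltW s1) a0 c0 cm l0 l1 H1 H2.
Qed.
End Key.
Section Ray.
Variable R : realType.
Local Notation N := (@kor_norm R).
Local Notation o := (@o R).

Lemma N_pos (q : hpt R) : q != o -> 0 < N q.
Proof. move=> qo; rewrite lt_def N_ge0 andbT; apply/eqP => /N_eq0 e; by rewrite e eqxx in qo. Qed.

Lemma mono (u : hpt R) s1 s2 : N u = 1 -> 0 < s1 -> s1 < s2 -> s2 < 1 -> fd (dil s2 u) < fd (dil s1 u).
Proof.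
move=> Nu h1 h12 h2.
have s20 : 0 < s2 by apply: lt_trans h12.
have Nq : N (dil s2 u) = s2 by rewrite N_dil ?Nu ?mulr1 // ltW.
have -> : dil s1 u = dil (s1 / s2) (dil s2 u) by rewrite dil_dil mulfVK // gt_eqF.
apply: key.
- by rewrite Nq.
- by apply/eqP => e; move: Nq; rewrite e N0 => e'; move: s20; rewrite -e' ltxx.
- by apply: divr_ge0; apply: ltW.
- by rewrite ltr_pdivrMr // mul1r.
Qed.

Lemma root_uniq (u : hpt R) s1 s2 : N u = 1 -> 0 < s1 -> s1 < 1 -> 0 < s2 -> s2 < 1 ->
  fd (dil s1 u) = fd (dil s2 u) -> s1 = s2.
Proof.
move=> Nu a1 b1 a2 b2 e.
case: (ltgtP s1 s2) => // h.
  by have := mono Nu a1 h b2; rewrite e ltxx.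
by have := mono Nu a2 h b1; rewrite e ltxx.
Qed.

Lemma cont_ray (u : hpt R) : continuous (fun s : R => fd (dil s u)).
Proof.
move=> s; apply: cvg_fd.
exact: (@cont_dil _ _ (nbhs s) _ id (fun _ => u) s u cvg_id (cvg_cst u)).
Qed.

Lemma root_ex (r : R) (u : hpt R) : 0 < r -> r < 1 -> N u = 1 ->
  exists s, (0 < s < 1) /\ fd (dil s u) = 1 - r.
Proof.
move=> r0 r1 Nu.
have p0 : fd (dil 0 u) = 1 by rewrite dil0 fd_o.
have p1 : fd (dil 1 u) = 0 by rewrite dil1 fd_bd.
have [c c01 pc] : exists2 c, c \in `[0, 1] & fd (dil c u) = 1 - r.
  apply: IVT; first exact: ler01.
    apply: continuous_subspaceT; exact: cont_ray.
  rewrite p0 p1; apply/andP; split.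
    by rewrite ge_min; apply/orP; right; lra.
  by rewrite le_max; apply/orP; left; lra.
move: c01; rewrite in_itv /= => /andP [c0 c1].
exists c; split => //; apply/andP; split.
  rewrite lt_def c0 andbT; apply/eqP => e; move: pc; rewrite e p0; lra.
rewrite lt_def c1 andbT; apply/eqP => e; move: pc; rewrite -e p1; lra.
Qed.

Definition sig (r : R) (u : hpt R) : R :=
  xget 0 [set s : R | (0 < s < 1) /\ fd (dil s u) = 1 - r].

Lemma sigP (r : R) (u : hpt R) : 0 < r -> r < 1 -> N u = 1 ->
  (0 < sig r u < 1) /\ fd (dil (sig r u) u) = 1 - r.
Proof. move=> r0 r1 Nu; exact: (xgetPex 0 (root_ex r0 r1 Nu)). Qed.

Lemma sig_eq (r : R) (u : hpt R) s : 0 < r -> r < 1 -> N u = 1 ->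
  0 < s -> s < 1 -> fd (dil s u) = 1 - r -> sig r u = s.
Proof.
move=> r0 r1 Nu a b e.
have [/andP [a' b'] e'] := sigP r0 r1 Nu.
by apply: (root_uniq Nu) => //; rewrite e e'.
Qed.
End Ray.
Section Main.
Variable R : realType.
Local Notation N := (@kor_norm R).
Local Notation o := (@o R).
Implicit Types (p q w : hpt R).

Definition Dq q : R := Num.sqrt (hA q ^+ 2 + 4 * q.2 ^+ 2).
Definition kq q : R := Num.sqrt (2 / (hA q + Dq q)).
Definition Qm q : hpt R := dil (kq q) q.
Definition Um w : hpt R := dil (N w)^-1 w.
Definition Gm (r : R) w : hpt R := dil (sig r (Um w)) (Um w).

Lemma Dq_ge0 q : 0 <= Dq q. Proof. exact: sqrtr_ge0. Qed.
Lemma Dq_sq q : Dq q ^+ 2 = hA q ^+ 2 + 4 * q.2 ^+ 2.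
Proof. rewrite sqr_sqrtr //; apply: addr_ge0; [exact: sqr_ge0| apply: mulr_ge0 => //; exact: sqr_ge0]. Qed.

Lemma oE q : q.1.1 = 0 -> q.1.2 = 0 -> q.2 = 0 -> q = o.
Proof. by case: q => [[x y] t] /= -> -> ->. Qed.

Lemma den_pos q : q != o -> 0 < hA q + Dq q.
Proof.
move=> qo; have A0 := hA_ge0 q; have D0 := Dq_ge0 q.
case: (eqVneq (hA q) 0) => hA0'.
  have [x0 y0] := hA0 hA0'.
  have t0 : q.2 != 0 by apply/eqP => t0; move: qo; rewrite (oE x0 y0 t0) eqxx.
  rewrite hA0' add0r /Dq hA0' expr0n /= add0r sqrtr_gt0.
  by apply: mulr_gt0 => //; rewrite exprn_even_gt0.
have : 0 < hA q by rewrite lt0r hA0' A0.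
lra.
Qed.

Lemma kq_pos q : q != o -> 0 < kq q.
Proof. by move=> qo; rewrite /kq sqrtr_gt0 divr_gt0 // den_pos. Qed.
Lemma kq_sq q : q != o -> kq q ^+ 2 = 2 / (hA q + Dq q).
Proof. by move=> qo; rewrite /kq sqr_sqrtr // ltW // divr_gt0 // den_pos. Qed.

Lemma Qm_S2 q : q != o -> sphere2 (Qm q).
Proof.
move=> qo; rewrite /sphere2 /Qm /dil /=.
have d0 := den_pos qo; have dn : hA q + Dq q != 0 by rewrite gt_eqF.
have e : 2 * hA q * (hA q + Dq q) + 4 * q.2 ^+ 2 = (hA q + Dq q) ^+ 2.
  have := Dq_sq q; move=> h; rewrite sqrrD h; ring.
have -> : (kq q * q.1.1) ^+ 2 + (kq q * q.1.2) ^+ 2 + (kq q ^+ 2 * q.2) ^+ 2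
   = kq q ^+ 2 * hA q + (kq q ^+ 2) ^+ 2 * q.2 ^+ 2 by rewrite /hA; ring.
rewrite kq_sq //.
have -> : 2 / (hA q + Dq q) * hA q + (2 / (hA q + Dq q)) ^+ 2 * q.2 ^+ 2
   = (2 * hA q * (hA q + Dq q) + 4 * q.2 ^+ 2) / (hA q + Dq q) ^+ 2 by field.
by rewrite e divff // expf_neq0.
Qed.

Lemma Qm_dil l q : 0 < l -> Qm (dil l q) = Qm q.
Proof.
move=> l0; rewrite /Qm dil_dil; congr dil.
have hD : Dq (dil l q) = l ^+ 2 * Dq q.
  rewrite /Dq hA_dil /dil /= -sqrt_kx ?sqr_ge0 //; congr Num.sqrt; ring.
rewrite /kq hD hA_dil -mulrDr.
have -> : 2 / (l ^+ 2 * (hA q + Dq q)) = (l^-1) ^+ 2 * (2 / (hA q + Dq q)).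
  case: (eqVneq (hA q + Dq q) 0) => [->|hn]; first by rewrite mulr0 !invr0 !mulr0.
  field; apply/andP; split => //; exact: lt0r_neq0.
rewrite sqrt_kx ?invr_ge0 ?ltW // mulrC mulrA mulfV ?mul1r //; exact: lt0r_neq0.
Qed.

Lemma S2_hA w : sphere2 w -> hA w + w.2 ^+ 2 = 1. Proof. by rewrite /sphere2 /hA. Qed.
Lemma S2_neq0 w : sphere2 w -> w != o.
Proof. move=> /S2_hA h; apply/eqP => e; move: h; rewrite e /hA /o /= expr0n /= !addr0 => /eqP; rewrite eq_sym oner_eq0. by []. Qed.

Lemma Qm_id w : sphere2 w -> Qm w = w.
Proof.
move=> Sw; have h := S2_hA Sw.
have A0 := hA_ge0 w; have t0 := sqr_ge0 w.2.
have hD : Dq w = 2 - hA w.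
  rewrite /Dq; have -> : hA w ^+ 2 + 4 * w.2 ^+ 2 = (2 - hA w) ^+ 2.
    have -> : w.2 ^+ 2 = 1 - hA w by lra.
    ring.
  by rewrite sqrtr_sqr ger0_norm //; lra.
rewrite /Qm /kq hD addrC subrK divff ?sqrtr1 ?dil1 //.
Qed.

Lemma Um_N w : w != o -> N (Um w) = 1.
Proof.
move=> wo; have := N_pos wo => h.
by rewrite /Um N_dil ?invr_ge0 ?ltW // mulVf // lt0r_neq0.
Qed.

Lemma cont_Um w : w != o -> {for w, continuous Um}.
Proof.
move=> wo; have h := N_pos wo.
apply: (@cont_dil _ _ (nbhs w) _ (fun x => (N x)^-1) id); last exact: cvg_id.
apply: cvgV; first exact: lt0r_neq0.
exact: cont_N.
Qed.
Lemma cont_Dq : continuous Dq.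
Proof.
move=> q; apply: csqrt; apply: cvgD; first by apply: csq; exact: cont_hA.
apply: cvgM; first exact: cvg_cst.
apply: csq; exact: c2.
Qed.

Lemma cont_Qm q : q != o -> {for q, continuous Qm}.
Proof.
move=> qo.
apply: (@cont_dil _ _ (nbhs q) _ kq id); last exact: cvg_id.
apply: csqrt; apply: cvgM; first exact: cvg_cst.
apply: cvgV; first by apply: lt0r_neq0; exact: den_pos.
apply: cvgD; [exact: cont_hA| exact: cont_Dq].
Qed.

Lemma sig_cont (r : R) w0 : 0 < r -> r < 1 -> sphere2 w0 ->
  (fun w => sig r (Um w)) @ within (@sphere2 R) (nbhs w0) --> sig r (Um w0).
Proof.
move=> r0 r1 Sw0.
have Nu0 := Um_N (S2_neq0 Sw0).
have [/andP [s00 s01] fs0] := sigP r0 r1 Nu0.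
set s0 := sig r (Um w0) in s00 s01 fs0 *.
apply/cvgrPdist_lt => e e0.
set e' := Num.min (e / 2) (Num.min (s0 / 2) ((1 - s0) / 2)).
have ep : 0 < e' by rewrite !lt_min; apply/and3P; split; lra.
have ee : e' <= e / 2 by rewrite ge_min lexx.
have es : e' <= s0 / 2 by rewrite ge_min; apply/orP; right; rewrite ge_min lexx.
have es' : e' <= (1 - s0) / 2 by rewrite ge_min; apply/orP; right; rewrite ge_min lexx orbT.
set a := s0 - e'; set b := s0 + e'.
have fa : 1 - r < fd (dil a (Um w0)) by rewrite -fs0; apply: mono => //; rewrite /a; lra.
have fb : fd (dil b (Um w0)) < 1 - r by rewrite -fs0; apply: mono => //; rewrite /b; lra.
have ca : (fun w => fd (dil a (Um w))) @ w0 --> fd (dil a (Um w0)).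
  apply: cvg_fd; apply: (@cont_dil _ _ (nbhs w0) _ (fun _ => a) Um); first exact: cvg_cst.
  exact: cont_Um (S2_neq0 Sw0).
have cb : (fun w => fd (dil b (Um w))) @ w0 --> fd (dil b (Um w0)).
  apply: cvg_fd; apply: (@cont_dil _ _ (nbhs w0) _ (fun _ => b) Um); first exact: cvg_cst.
  exact: cont_Um (S2_neq0 Sw0).
have Na : \forall w \near w0, 1 - r < fd (dil a (Um w)) by move: ca => /cvgr_gt /(_ _ fa).
have Nb : \forall w \near w0, fd (dil b (Um w)) < 1 - r by move: cb => /cvgr_lt /(_ _ fb).
rewrite near_withinE; near=> w => Sw.
have Nu := Um_N (S2_neq0 Sw).
have [/andP [p0 p1] pe] := sigP r0 r1 Nu.
set sg := sig r (Um w) in p0 p1 pe *.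
have ha : 1 - r < fd (dil a (Um w)) by near: w; exact: Na.
have hb : fd (dil b (Um w)) < 1 - r by near: w; exact: Nb.
have h1 : a < sg.
  rewrite ltNge; apply/negP; rewrite le_eqVlt => /orP [/eqP e1|e1].
    by move: ha; rewrite -e1 pe ltxx.
  have := mono Nu p0 e1 (_ : a < 1); rewrite pe => h.
  have : a < 1 by rewrite /a; lra.
  by move=> /h; lra.
have h2 : sg < b.
  rewrite ltNge; apply/negP; rewrite le_eqVlt => /orP [/eqP e1|e1].
    by move: hb; rewrite e1 pe ltxx.
  have : 0 < b by rewrite /b; lra.
  by move=> b0; have := mono Nu b0 e1 p1; rewrite pe; lra.
rewrite ltr_norml; apply/andP; split; rewrite /a /b in h1 h2; lra.
Unshelve. all: by end_near.
Qed.
End Main.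

Unset Implicit Arguments.

Theorem proposition6p7 (R : realType) (r : R) (hr0 : 0 < r) (hr1 : r < 1) :
  homeomorphic (Sigma r) (@sphere2 R).
Proof.
have So : forall q, Sigma r q -> q != o R.
  move=> q [_ fq]; apply/eqP => e; move: fq; rewrite e.
  change (fd (o R) = 1 - r -> False); rewrite fd_o; lra.
exists (@Qm R), (Gm r); split; first split.
- move=> q Sq; exact: Qm_S2 (So q Sq).
- move=> w Sw; have Nu := Um_N (S2_neq0 Sw).
  have [/andP [p0 p1] pe] := sigP hr0 hr1 Nu.
  split; last exact: pe.
  by rewrite /kball /= /Gm N_dil ?Nu ?mulr1 // ltW.
- move=> q Sq; have qo := So q Sq.
  have k0 := kq_pos qo; have n0 := N_pos qo.
  have hU : Um (Qm q) = dil (kor_norm q)^-1 q.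
    rewrite /Um /Qm N_dil ?ltW // dil_dil invfM mulrAC mulVf ?mul1r //; exact: lt0r_neq0.
  rewrite /Gm hU.
  have Nq1 : kor_norm q < 1 by case: Sq.
  have Nu : kor_norm (dil (kor_norm q)^-1 q) = 1 by rewrite N_dil ?invr_ge0 ?ltW // mulVf // lt0r_neq0.
  rewrite (@sig_eq _ r _ (kor_norm q)) //.
    by rewrite dil_dil mulfV ?dil1 // lt0r_neq0.
  by rewrite dil_dil mulfV ?dil1 ?lt0r_neq0 //; case: Sq.
- move=> w Sw; have Nu := Um_N (S2_neq0 Sw).
  have [/andP [p0 p1] pe] := sigP hr0 hr1 Nu.
  rewrite /Gm Qm_dil // /Um Qm_dil ?Qm_id // invr_gt0; exact: N_pos (S2_neq0 Sw).
split.
  apply: continuous_in_subspaceT => q; rewrite inE => Sq.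
  exact: cont_Qm (So q Sq).
apply/subspace_continuousP => w Sw.
rewrite /Gm.
apply: (@cont_dil _ _ (within (@sphere2 R) (nbhs w)) _ (fun x => sig r (Um x)) (@Um R)).
  exact: sig_cont.
apply: (cvg_trans _ (cont_Um (S2_neq0 Sw))).
apply: cvg_fmap2; exact: cvg_within.
Qed.
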